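(* Let $m,n,T$ be positive integers with $T\ge 2$, let $\mathbf{G}\in\mathbb{F}_2^{n\times m}$ have $n$ distinct nonzero rows $\mathbf{g}_1,\dots,\mathbf{g}_n$ spanning a subspace of dimension $T$, and let $\mathbf{A}\in\mathbb{F}_2^{T\times m}$ be a matrix whose rows form a basis of the row space of $\mathbf{G}$. Let $1\le k<\lceil T/2\rceil$, put $T_c=\lceil T/(2k-1)\rceil$ and $T_{\text{last}}=T-(2k-1)(T_c-1)$, and define $$T_{\text{ub}}=\begin{cases}2^T & \text{if } k=1,\\ 2(2k+1)^{T_c-1} & \text{if } k\neq 1 \text{ and } T_{\text{last}}=1,\\ (2k+1)^{T_c-1}(T_{\text{last}}+2) & \text{otherwise.}\end{cases}$$ Then there exists a matrix $\mathbf{P}\in\mathbb{F}_2^{T_k\times T}$ with $T_k\le\min\{n,T_{\text{ub}}\}$ such that every $\mathbf{g}_i$ is the sum over $\mathbb{F}_2$ of at most $k$ rows of $\mathbf{P}\mathbf{A}$. Moreover, for $k\neq 1$, $T_{\text{ub}}=2^{O\left(\frac{T}{k}\log k\right)}$.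
   Context: Such a $\mathbf{P}$ is called a $k$-limited-access scheme with $T_k$ transmissions for the coding matrix $\mathbf{A}$. Logarithms are base 2. *)

(* Defs.v *)
From HB Require Import structures.
From mathcomp Require Import all_boot all_order all_algebra.
Set Implicit Arguments. Unset Strict Implicit. Unset Printing Implicit Defensive.

Definition ceil_div (a b : nat) : nat := (a + b.-1) %/ b.

Definition T_c (T k : nat) : nat := ceil_div T (2 * k - 1).

Definition T_last (T k : nat) : nat := T - (2 * k - 1) * (T_c T k - 1).

Definition T_ub (T k : nat) : nat :=
  if k == 1 then 2 ^ T
  else if T_last T k == 1 then 2 * (2 * k + 1) ^ (T_c T k - 1)
  else (2 * k + 1) ^ (T_c T k - 1) * (T_last T k + 2).

(* Main.v *)
Require Import Defs.
From HB Require Import structures.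
From mathcomp Require Import all_boot all_order all_algebra.
From mathcomp Require Import zify.
Import GRing.Theory.
Local Open Scope ring_scope.

Lemma F2_cases (a : 'F_2) : a = 0 \/ a = 1.
Proof. case: a => [[|[|n]]] H; [left|right|]; try by apply: val_inj. by []. Qed.

Lemma F2_add1 : (1 + 1 : 'F_2) = 0.
Proof. by apply: val_inj. Qed.

Definition bv (s i j : nat) : 'F_2 :=
  if i == 0%N then 0 else if (i <= s)%N then (j == i.-1)%:R else 1.

Definition supp (s : nat) (P : pred 'I_s) : seq nat := [seq (val j).+1 | j <- enum P].

Lemma sum_nth (V : zmodType) (F : nat -> V) k D :
  F 0%N = 0 -> (size D <= k)%N -> \sum_(i < k) F (nth 0%N D i) = \sum_(x <- D) F x.
Proof.
move=> F0; elim: D k => [|x D IH] k.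
- by move=> _; rewrite big_nil big1 // => i; rewrite nth_nil.
- case: k => [//|k] h; rewrite big_ord_recl big_cons /= IH //.
Qed.

Lemma sum_supp s (P : pred 'I_s) j (hj : (j < s)%N) :
  \sum_(x <- supp s P) bv s x j = (P (Ordinal hj))%:R.
Proof.
rewrite big_map big_enum /=.
have -> : \sum_(i in P) bv s (val i).+1 j = \sum_(i in P) ((Ordinal hj) == i)%:R.
  apply: eq_bigr => i _; rewrite /bv /= ltn_ord; by [].
case Pj: (P (Ordinal hj)).
- rewrite (bigD1 (Ordinal hj)) //= eqxx big1 ?addr0 //.
  by move=> i /andP[_ /negPf]; rewrite eq_sym => ->.
- rewrite big1 // => i Pi; case: eqP => // e; by move: Pi; rewrite -e unfold_in Pj.
Qed.

Definition dec (s k : nat) (y : nat -> 'F_2) : seq nat :=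
  let P1 := [pred j : 'I_s | y j != 0] in
  if (#|P1| <= k)%N then supp s P1 else s.+1 :: supp s [predC P1].

Lemma dec_ok s k y : (1 <= k)%N -> (s <= 2 * k - 1)%N ->
  (forall j, (j < s)%N -> \sum_(i < k) bv s (nth 0%N (dec s k y) i) j = y j) /\
  (forall i, (nth 0%N (dec s k y) i <= s + (k < s))%N).
Proof.
move=> hk hs.
set P1 := [pred j : 'I_s | y j != 0].
have hC := cardC P1; rewrite card_ord in hC.
have bv0 j : bv s 0 j = 0 by [].
have suppb (P : pred 'I_s) x : x \in supp s P -> (x <= s)%N.
  by case/mapP => z _ ->; exact: ltn_ord.
rewrite /dec -/P1; case: ifP => hle; split.
- move=> j hj; rewrite (@sum_nth _ (fun x => bv s x j)) // ?size_map -?cardE //.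
  rewrite sum_supp /P1 /=; by case: (F2_cases (y j)) => ->; rewrite ?eqxx.
- move=> i; case: (ltnP i (size (supp s P1))) => hi.
    by apply: leq_trans (suppb _ _ (mem_nth 0%N hi)) _; apply: leq_addr.
  by rewrite nth_default.
- move=> j hj; rewrite (@sum_nth _ (fun x => bv s x j)) //; last first.
    rewrite /= size_map -cardE; move: hle hC hs hk; set a := #|P1|; set b := #|_|; move=> *; lia.
  rewrite big_cons sum_supp /P1 /= /bv /= ltnn.
  by case: (F2_cases (y j)) => e; rewrite !inE /= e ?eqxx /= ?F2_add1 ?addr0.
- move=> i; have hks : (k < s)%N by move: hle hC hs hk; set a := #|P1|; set b := #|_|; move=> *; lia.
  rewrite hks; case: (ltnP i (size (s.+1 :: supp s [predC P1]))) => hi.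
    have := mem_nth 0%N hi; rewrite in_cons => /orP[/eqP -> |/suppb]; first by rewrite addn1.
    by move=> h; apply: leq_trans h _; apply: leq_addr.
  by rewrite nth_default.
Qed.
Lemma sum_to_set (V : zmodType) (I : finType) (F : I -> V) k (h : 'I_k -> I) :
  (forall v : V, v + v = 0) ->
  exists S : {set I}, (#|S| <= k)%N /\ \sum_(j < k) F (h j) = \sum_(r in S) F r.
Proof.
move=> vv; elim: k h => [|k IH] h.
  by exists set0; rewrite cards0 big_ord0 big_set0.
have [S [hS eS]] := IH (fun j => h (lift ord0 j)).
rewrite big_ord_recl eS.
case hin: (h ord0 \in S).
- exists (S :\ h ord0); split; first by rewrite (cardsD1 (h ord0)) hin in hS; lia.
  rewrite (big_setD1 (h ord0)) //= addrA vv add0r.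
  by apply: eq_bigl => r; rewrite !inE.
- exists (h ord0 |: S); rewrite big_setU1 ?hin //; split => //.
  rewrite cardsU1 hin /=; lia.
Qed.

Definition bb k := (2 * k - 1)%N.
Definition cc T k := (T_c T k - 1)%N.
Definition Nf k := (if k == 1%N then 1 else 2 * k)%N.+1.
Definition NL T k := (if T_last T k == 1%N then 1 else (T_last T k).+1).+1.
Definition Idx T k := ({ffun 'I_(cc T k) -> 'I_(Nf k)} * 'I_(NL T k))%type.

Definition ophi c N (phi : {ffun 'I_c -> 'I_N}) (b : nat) : nat :=
  if (insub b : option 'I_c) is Some i then val (phi i) else 0%N.
Arguments ophi {c N}.

Definition gval T k (p : Idx T k) (t : nat) : 'F_2 :=
  if (t < bb k * cc T k)%N then bv (bb k) (ophi p.1 (t %/ bb k)) (t %% bb k)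
  else bv (T_last T k) p.2 (t - bb k * cc T k).

Arguments gval {T k}.
Definition fvec T k (p : Idx T k) : 'rV['F_2]_T := \row_(t < T) gval p t.

Lemma arith T k : (1 <= k)%N -> (1 <= T)%N ->
  (bb k * cc T k + T_last T k = T /\ 1 <= T_last T k <= bb k /\ 1 <= T_c T k)%N.
Proof.
move=> hk hT; rewrite /bb /cc /T_last /T_c /ceil_div.
have h1 := divn_eq (T + (2 * k - 1).-1) (2 * k - 1).
have h2 := ltn_pmod (T + (2 * k - 1).-1) (_ : 0 < 2 * k - 1)%N.
move: h1 h2; set q := ((T + (2 * k - 1).-1) %/ (2 * k - 1))%N.
set r := ((T + (2 * k - 1).-1) %% (2 * k - 1))%N.
move=> h1 h2; have {h2} h2 : (r < 2 * k - 1)%N by apply: h2; lia.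
nia.
Qed.

Lemma card_Idx T k : (1 <= k)%N -> (1 <= T)%N -> #|{: Idx T k}| = T_ub T k.
Proof.
move=> hk hT; rewrite card_prod card_ffun !card_ord /Nf /NL /T_ub.
have [e1 [e2 e3]] := arith _ _ hk hT.
case: eqP => [ek|nk].
  subst k; move: e1 e2 e3; rewrite /bb /cc /T_last /T_c /ceil_div /= divn1 addn0.
  move=> e1 e2 e3; have -> : (T - 1 * (T - 1) = 1)%N by lia.
  rewrite eqxx -expnSr; congr (expn _ _); lia.
case: ifP => eL; first by rewrite addn1 mulnC.
by rewrite addn1 addn2.
Qed.
Arguments fvec {T k}.

Lemma universal T k (x : 'rV['F_2]_T) : (1 <= k)%N -> (1 <= T)%N ->
  exists h : 'I_k -> Idx T k, x = \sum_(i < k) fvec (h i).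
Proof.
move=> hk hT.
have [e1 [e2 e3]] := arith _ _ hk hT.
pose xn := fun t : nat => if (insub t : option 'I_T) is Some i then x 0 i else 0.
pose b := bb k; pose c := cc T k; pose L := T_last T k.
pose yb := fun (be : nat) (j : nat) => xn (be * b + j)%N.
pose yl := fun j => xn (b * c + j)%N.
have hb : (b <= 2 * k - 1)%N by [].
have hL : (L <= 2 * k - 1)%N by move: e2; rewrite /L /bb; lia.
have dB1 be := (dec_ok b k (yb be) hk hb).1.
have dB2 be := (dec_ok b k (yb be) hk hb).2.
have [dL1 dL2] := dec_ok L k yl hk hL.
exists (fun i => (([ffun be : 'I_(cc T k) => (inord (nth 0%N (dec b k (yb be)) i) : 'I_(Nf k))],
                 (inord (nth 0%N (dec L k yl) i) : 'I_(NL T k))) : Idx T k)).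
apply/rowP => t; rewrite summxE.
have -> : x 0 t = xn t by rewrite /xn valK.
under eq_bigr do rewrite mxE.
rewrite /gval /=.
case ht: (bb k * cc T k > t)%N; rewrite -/b -/c in ht *.
- have hbe : (t %/ b < c)%N.
    by rewrite ltn_divLR; [rewrite mulnC | rewrite /b /bb; lia].
  rewrite (eq_bigr (fun i : 'I_k => bv b (nth 0%N (dec b k (yb (Ordinal hbe))) i) (t %% b))); last first.
    move=> i _; rewrite /ophi insubT /= ffunE inordK //.
    have := dB2 (Ordinal hbe) i; rewrite /Nf /b /bb; case: ltnP => hkb /= ?; case: eqP => ek; lia.
  rewrite dB1; last by rewrite ltn_mod /b /bb; lia.
  by rewrite /yb /= -divn_eq.
- rewrite (eq_bigr (fun i : 'I_k => bv L (nth 0%N (dec L k yl) i) (t - b * c))); last first.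
    move=> i _; rewrite inordK //; have := dL2 i; rewrite /NL -/L; case: ltnP => hkb /= ?; case: eqP => eL; lia.
  rewrite dL1; last by move: e1 ht; rewrite -/b -/c -/L; have := ltn_ord t; lia.
  by rewrite /yl subnKC //; lia.
Qed.

Lemma part2 : exists C : nat, forall T k : nat,
      (2 <= T)%N -> (1 <= k)%N -> (k < ceil_div T 2)%N -> k != 1%N ->
      (T_ub T k ^ k <= k ^ (C * T))%N.
Proof.
exists 6%N => T k hT hk hkc nk.
have hk2 : (2 <= k)%N by case: k hk nk {hkc} => [|[|k]].
have hT2 : (2 * k + 1 <= T)%N by move: hkc; rewrite /ceil_div /=; lia.
have [e1 [e2 e3]] := arith _ _ hk (ltnW hT).
have hub : (T_ub T k <= (2 * k + 1) ^ T_c T k)%N.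
  rewrite /T_ub (negPf nk).
  have -> : T_c T k = (T_c T k - 1).+1 by lia.
  rewrite expnSr subSS subn0 mulnC.
  case: ifP => _; first by apply: leq_mul => //; lia.
  by apply: leq_mul => //; move: e2; rewrite /bb; lia.
have hq : (k * T_c T k <= 2 * T)%N.
  move: e1 e2 e3; rewrite /bb /cc; set q := T_c T k; set L := T_last T k.
  move=> e1 e2 e3; nia.
apply: leq_trans (_ : ((2 * k + 1) ^ T_c T k) ^ k <= _)%N.
  by rewrite leq_exp2r.
rewrite -expnM (mulnC (T_c T k) k).
apply: leq_trans (_ : (2 * k + 1) ^ (2 * T) <= _)%N.
  by apply: leq_pexp2l => //; lia.
have -> : (6 * T = 3 * (2 * T))%N by lia.
rewrite (expnM k 3) leq_exp2r; last by lia.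
rewrite !expnS expn0 muln1; nia.
Qed.

Lemma F2vv m (v : 'rV['F_2]_m) : v + v = 0.
Proof.
apply/rowP => t; rewrite !mxE.
by case: (F2_cases (v 0 t)) => ->; rewrite ?addr0 ?F2_add1.
Qed.

Theorem theorem1 :
  (forall (m n T k : nat) (G : 'M['F_2]_(n, m)) (A : 'M['F_2]_(T, m)),
      (0 < m)%N -> (0 < n)%N -> (2 <= T)%N ->
      injective (fun i : 'I_n => row i G) ->
      (forall i : 'I_n, row i G != 0) ->
      \rank G = T ->
      (A == G)%MS -> row_free A ->
      (1 <= k)%N -> (k < ceil_div T 2)%N ->
      exists (Tk : nat) (P : 'M['F_2]_(Tk, T)),
        (Tk <= minn n (T_ub T k))%N /\
        forall i : 'I_n, exists S : {set 'I_Tk},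
          (#|S| <= k)%N /\ row i G = \sum_(j in S) row j (P *m A))
  /\
  (exists C : nat, forall T k : nat,
      (2 <= T)%N -> (1 <= k)%N -> (k < ceil_div T 2)%N -> k != 1%N ->
      (T_ub T k ^ k <= k ^ (C * T))%N).
Proof.
split; last exact: part2.
move=> m n T k G A hm hn hT _ _ _ hAG _ hk hkc.
have hT1 : (1 <= T)%N by apply: ltnW.
have hGA : (G <= A)%MS by case/andP: hAG.
pose X := G *m pinvmx A.
have eX : X *m A = G by exact: mulmxKpV.
case: (leqP n (T_ub T k)) => hnT.
- exists n, X; split; first by lia.
  move=> i; exists [set i]; rewrite cards1 hk; split => //.
  by rewrite big_set1 eX.
- pose P := \matrix_(r < #|{: Idx T k}|, t < T) fvec (enum_val r) 0 t.
  exists #|{: Idx T k}|, P; split.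
    by rewrite card_Idx //; lia.
  move=> i; have [h eh] := universal _ _ (row i X) hk hT1.
  have [S [hS eS]] := @sum_to_set _ _ (fun r => row r (P *m A)) _ (fun j => enum_rank (h j)) (@F2vv m).
  exists S; split => //; rewrite -eS -eX row_mul eh mulmx_suml.
  apply: eq_bigr => j _; rewrite row_mul; congr (_ *m _).
  by apply/rowP => t; rewrite !mxE enum_rankK.
Qed.
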